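(* Let $A\in M_n$ be normal and $c\in\mathbb{R}^n$. Then $W(A;c)$ is the intersection of finitely many closed half-planes of $\mathbb{C}$ and is bounded; i.e. $W(A;c)$ is a convex polygon (possibly empty, a single point, or a line segment).
   Context: $M_n$ denotes the space of $n\times n$ complex matrices. For $A\in M_n$ and $\theta\in\mathbb{R}$, put $H_\theta(A)=\frac{1}{2}(e^{i\theta}A+e^{-i\theta}A^* )$, a Hermitian matrix. For a Hermitian $H\in M_n$, $\lambda_1(H)\ge\lambda_2(H)\ge\cdots\ge\lambda_n(H)$ denote its eigenvalues in nonincreasing order, counted with multiplicity. For $c=(c_1,\dots,c_n)^t\in\mathbb{R}^n$ the weighted numerical range of $A$ is $$W(A;c)=\bigcap_{\theta\in[0,2\pi)}\Big\{v\in\mathbb{C}:\ \mathrm{Re}(e^{i\theta}v)\le \sum_{j=1}^n c_j\lambda_j(H_\theta(A))\Big\}.$$ *)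

(* Defs.v *)
From HB Require Import structures.
From mathcomp Require Import all_boot all_order all_algebra.
Set Implicit Arguments. Unset Strict Implicit. Unset Printing Implicit Defensive.
Import Order.TTheory GRing.Theory Num.Theory.
Local Open Scope ring_scope.

Definition adjmx (C : numClosedFieldType) (m n : nat) (A : 'M[C]_(m, n)) : 'M[C]_(n, m) :=
  map_mx (fun z => z^*) A^T.

Definition is_normal_mx (C : numClosedFieldType) (n : nat) (A : 'M[C]_n) : Prop :=
  A *m adjmx A = adjmx A *m A.

(* H_theta(A) with u = e^{i theta}:  (u A + conj(u) A^* ) / 2 *)
Definition Hpart (C : numClosedFieldType) (n : nat) (u : C) (A : 'M[C]_n) : 'M[C]_n :=
  2^-1 *: (u *: A + u^* *: adjmx A).

(* The eigenvalues of H (roots of its characteristic polynomial, with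
   multiplicity), sorted in nonincreasing order.  For Hermitian H all roots
   are real, hence totally ordered. *)
Definition eigs_desc (C : numClosedFieldType) (n : nat) (H : 'M[C]_n) : seq C :=
  sort (fun x y : C => y <= x) (sval (closed_field_poly_normal (char_poly H))).

(* lambda_j(H), j = 0 .. n-1 (0-based; lambda_1 in the paper is j = 0) *)
Definition eig (C : numClosedFieldType) (n : nat) (H : 'M[C]_n) (j : 'I_n) : C :=
  nth 0 (eigs_desc H) j.

(* Weighted numerical range W(A;c); theta in [0,2pi) is parametrised by
   u = e^{i theta} ranging over the unit circle |u| = 1. *)
Definition wnr (C : numClosedFieldType) (n : nat) (A : 'M[C]_n) (c : 'I_n -> C)
  (v : C) : Prop :=
  forall u : C, `|u| = 1 ->
    'Re (u * v) <= \sum_(j < n) c j * eig (Hpart u A) j.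

(* Main.v *)
Require Import Defs.
From HB Require Import structures.
From mathcomp Require Import all_boot all_order all_algebra.
From mathcomp Require Import ring.
Import Order.TTheory GRing.Theory Num.Theory.
Local Open Scope ring_scope.
Set Implicit Arguments. Unset Strict Implicit. Unset Printing Implicit Defensive.

Section Polar.
Variable C : numClosedFieldType.

Definition Kc (B : seq C) (u : C) := all (fun b => 0 <= 'Re (u * b)) B.
Definition H0 (B : seq C) : seq C :=
  [:: 1; -1; 'i; - 'i] ++ flatten [seq [:: b^*; 'i * b^*; - ('i * b^*)] | b <- B].
Definition Hs (B : seq C) := [seq h <- H0 B | (h != 0) && Kc B h].

Lemma ReRl (t z : C) : t \is Num.real -> 'Re (t * z) = t * 'Re z.
Proof. by move=> tR; rewrite (ReMl tR). Qed.

Lemma Kc_scale B (l h : C) : 0 < l -> Kc B (l * h) = Kc B h.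
Proof.
move=> l0; apply: eq_all => b /=; rewrite -mulrA ReRl ?gtr0_real //.
by rewrite pmulr_rge0.
Qed.

Lemma argmin_seq (T : eqType) (f : T -> C) (s : seq T) : s != [::] ->
  (forall x, f x \is Num.real) -> exists2 m, m \in s & forall x, x \in s -> f m <= f x.
Proof.
move=> + fR; elim: s => // x [|y s] IH _.
  by exists x; rewrite ?mem_head // => z; rewrite inE => /eqP->.
have [m ms mmin] := IH isT.
have [xm|mx] := boolP (f x <= f m).
  exists x; first exact: mem_head.
  move=> z; rewrite inE => /orP[/eqP->//|/mmin]; exact: le_trans.
exists m; first by rewrite inE ms orbT.
move=> z; rewrite inE => /orP[/eqP->|/mmin//].
by move: mx; rewrite real_leNgt ?fR // negbK => /ltW.
Qed.

Lemma edge B (u e : C) : Kc B u -> Kc B e \/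
  exists t b, [/\ 0 <= t, b \in B, 'Re (e * b) < 0, Kc B (u + t * e) &
                  'Re ((u + t * e) * b) = 0].
Proof.
move=> /allP Ku.
set S := [seq b <- B | 'Re (e * b) < 0].
have [S0|Sn0] := eqVneq S [::].
  left; apply/allP => b bB; rewrite real_leNgt ?real0 //=.
  apply/negP => ebneg; have : b \in S by rewrite mem_filter ebneg.
  by rewrite S0.
right.
have [bm bmS bmmin] := @argmin_seq _ (fun b => 'Re (u * b) / - 'Re (e * b)) _ Sn0
   (fun b => ltac:(by rewrite realM ?realV ?realN)).
move: (bmS); rewrite mem_filter => /andP[ebm bmB].
pose t : C := 'Re (u * bm) / - 'Re (e * bm).
have tR : t \is Num.real by rewrite realM ?realV ?realN.
have ebm' : 0 < - 'Re (e * bm) by rewrite oppr_gt0.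
have expand b : 'Re ((u + t * e) * b) = 'Re (u * b) + t * 'Re (e * b).
  by rewrite mulrDl raddfD /= -mulrA (ReRl _ tR).

exists t, bm; split => //.
- by rewrite divr_ge0 ?Ku // ltW.
- apply/allP => b bB; rewrite expand.
  have [eb|eb] := real_leP (real0 C) (Creal_Re (e * b)).
    by rewrite addr_ge0 ?Ku // mulr_ge0 // divr_ge0 ?Ku // ltW.
  have bS : b \in S by rewrite mem_filter eb.
  have := bmmin b bS; rewrite -/t => tle.
  have eb' : 0 < - 'Re (e * b) by rewrite oppr_gt0.
  rewrite -(ler_pM2r eb') divfK ?gt_eqF // in tle.
  have -> : 'Re (u * b) + t * 'Re (e * b) = 'Re (u * b) - t * - 'Re (e * b) by rewrite mulrN opprK.
  by rewrite subr_ge0.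
- by rewrite expand /t invrN mulrN mulNr -mulrA mulVf ?mulr1 ?subrr // lt_eqF.
Qed.


Lemma memH0 B (b : C) : b \in B ->
  [/\ b^* \in H0 B, 'i * b^* \in H0 B & - ('i * b^*) \in H0 B].
Proof.
move=> bB; rewrite /H0 !mem_cat; split; apply/orP; right; apply/flatten_mapP;
  by exists b => //; rewrite !inE eqxx ?orbT.
Qed.

Lemma ReLin (N q u g z : C) : N \is Num.real -> q \is Num.real ->
  'Re ((N * u - q * g) * z) = N * 'Re (u * z) - q * 'Re (g * z).
Proof.
by move=> NR qR; rewrite mulrBl raddfB /= -!mulrA (ReRl _ NR) (ReRl _ qR).
Qed.

Lemma scaled B w (x h N l : C) : (forall h, h \in Hs B -> 'Re (h*w) <= 0) ->
  0 < N -> 0 < l -> N * x = l * h -> h \in H0 B -> h != 0 -> Kc B x ->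
  'Re (x * w) <= 0.
Proof.
move=> Hw N0 l0 E hH h0 Kx.
have Kh : Kc B h by rewrite -(Kc_scale _ _ l0) -E Kc_scale.
have := Hw h; rewrite mem_filter h0 Kh hH => /(_ isT) hw.
rewrite -(pmulr_rle0 _ N0) -ReRl ?gtr0_real // mulrA E -mulrA ReRl ?gtr0_real //.
by rewrite pmulr_rle0.
Qed.

Lemma tight B w (x b : C) : (forall h, h \in Hs B -> 'Re (h*w) <= 0) ->
  Kc B x -> b \in B -> b != 0 -> 'Re (x * b) = 0 -> 'Re (x * w) <= 0.
Proof.
move=> Hw Kx bB b0 xb0.
have [->|x0] := eqVneq x 0; first by rewrite mul0r raddf0.
pose y := 'Im (x * b).
have yR : y \is Num.real by apply: Creal_Im.
have xb : x * b = 'i * y by rewrite [x * b]Crect xb0 add0r.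
pose N := b * b^*.
have N0 : 0 < N by rewrite mul_conjC_gt0.
have NE : N * x = y * ('i * b^*).
  have -> : N * x = (x * b) * b^* by rewrite /N; ring.
  by rewrite xb; ring.
have y0 : y != 0.
  apply: contra x0 => /eqP y0; move: xb; rewrite y0 mulr0 => /eqP.
  by rewrite mulf_eq0 (negPf b0) orbF.
have [H1 H2 H3] := memH0 bB.
have [ylt|ygt|yeq] := real_ltgtP (x:=y) yR (real0 _).
- apply: (scaled (h := - ('i * b^*)) (l := - y) Hw N0) => //.
  + by rewrite oppr_gt0.
  + by rewrite mulrNN.
  + by rewrite oppr_eq0 mulf_eq0 negb_or neq0Ci conjC_eq0.
- apply: (scaled Hw N0 ygt NE) => //.
  by rewrite mulf_eq0 negb_or neq0Ci conjC_eq0.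
- by move/eqP: y0.
Qed.

Lemma polar B w : (forall u, Kc B u -> 'Re (u * w) <= 0) <->
  (forall h, h \in Hs B -> 'Re (h * w) <= 0).
Proof.
split=> [Hu h|Hw u Ku]; first by rewrite mem_filter => /andP[/andP[_ /Hu]].
have [/hasP [b0 b0B b0n0] | /hasPn allz] := boolP (has (fun b => b != 0) B); last first.
  have Kall h : Kc B h.
    by apply/allP => b /allz; rewrite negbK => /eqP->; rewrite mulr0 raddf0.
  have inHs h : h \in [:: 1; -1; 'i; - 'i] -> h != 0 -> 'Re (h * w) <= 0.
    by move=> hin h0; apply: Hw; rewrite mem_filter h0 Kall mem_cat hin.
  have h1 := inHs 1 (mem_head _ _) (oner_neq0 _).
  have h2 := inHs (-1) ltac:(by rewrite !inE eqxx orbT) ltac:(by rewrite oppr_eq0 oner_neq0).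
  have h3 := inHs 'i ltac:(by rewrite !inE eqxx !orbT) (neq0Ci _).
  have h4 := inHs (- 'i) ltac:(by rewrite !inE eqxx !orbT) ltac:(by rewrite oppr_eq0 neq0Ci).
  rewrite mul1r in h1; rewrite mulN1r raddfN /= oppr_le0 in h2.
  rewrite ReMil oppr_le0 in h3; rewrite mulNr raddfN /= ReMil opprK in h4.
  have w0 : w = 0.
    have r0 : 'Re w = 0 by apply/le_anti; rewrite h1 h2.
    have i0 : 'Im w = 0 by apply/le_anti; rewrite h3 h4.
    by rewrite (Crect w) r0 i0 mulr0 addr0.
  by rewrite w0 mulr0 raddf0.
have ub0 := allP Ku b0 b0B.
rewrite real_leNgt ?real0 //; apply/negP => pos.
have tw := tight Hw.
have [ub0z|ub0p] := eqVneq ('Re (u * b0)) 0.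
  by move: (tw _ _ Ku b0B b0n0 ub0z); rewrite real_leNgt ?real0 // pos.
have {ub0p} ub0p : 0 < 'Re (u * b0) by rewrite lt_neqAle eq_sym ub0p ub0.
pose g := 'i * b0^*.
pose N := b0 * b0^*.
have N0 : 0 < N by rewrite mul_conjC_gt0.
have NR : N \is Num.real by rewrite gtr0_real.
have gb0 : 'Re (g * b0) = 0.
  rewrite /g -mulrA ReMil; apply/eqP; rewrite oppr_eq0; apply/eqP/Creal_ImP.
  rewrite mulrC; apply: ger0_real.
  exact: mul_conjC_ge0.
have S1 e : 'Re (e * b0) = 0 -> 0 <= 'Re (e * w) -> Kc B e /\ 'Re (e * w) = 0.
  move=> eb0 ew; have [Ke|[t [b [t0 bB eb Kx xb]]]] := edge e Ku.
    by split=> //; apply: le_anti; rewrite ew (tw _ _ Ke b0B b0n0 eb0).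
  have b0' : b != 0 by apply: contraTneq eb => ->; rewrite mulr0 raddf0 ltxx.
  have := tw _ _ Kx bB b0' xb.
  rewrite mulrDl raddfD /= -mulrA (ReRl _ (ger0_real t0)).
  rewrite real_leNgt ?real0 ?realD ?realM ?(ger0_real t0) //.
  by case/negP; apply: (lt_le_trans pos); rewrite lerDl mulr_ge0.
have gw : 'Re (g * w) = 0.
  have [gw|gw] := real_leP (real0 C) (Creal_Re (g * w)); first by case: (S1 g gb0 gw).
  have := S1 (- g); rewrite mulNr raddfN /= gb0 oppr0 mulNr raddfN /= oppr_ge0.
  move=> /(_ erefl (ltW gw)) [_ /eqP]; rewrite oppr_eq0 => /eqP //.
have [Kg _] := S1 g gb0 ltac:(by rewrite gw).
have [KNg _] : Kc B (- g) /\ 'Re (- g * w) = 0.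
  by apply: S1; rewrite mulNr raddfN /= ?gb0 ?gw oppr0.
have gbz b : b \in B -> 'Re (g * b) = 0.
  move=> bB; apply/le_anti; rewrite (allP Kg b bB) andbT.
  by have := allP KNg b bB; rewrite mulNr raddfN /= oppr_ge0.
pose q := 'Im (u * b0).
have qR : q \is Num.real by apply: Creal_Im.
have key : 'Re (u * b0) * b0^* = N * u - q * g.
  have E := Crect (u * b0).
  have -> : 'Re (u * b0) * b0^* = (u * b0 - 'i * 'Im (u * b0)) * b0^*.
    by rewrite {2}E addrK.
  by rewrite /N /g /q; ring.
have lin z : 'Re (u * b0) * 'Re (b0^* * z) = N * 'Re (u * z) - q * 'Re (g * z).
  by rewrite -ReRl // mulrA key ReLin.
have Kb : Kc B b0^*.
  apply/allP => b bB; rewrite -(pmulr_rge0 _ ub0p) lin gbz // mulr0 subr0.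
  by rewrite mulr_ge0 ?(ltW N0) ?(allP Ku b bB).
have := Hw b0^*; rewrite mem_filter conjC_eq0 b0n0 Kb.
have [H1 _ _] := memH0 b0B; rewrite H1 => /(_ isT).
by rewrite -(pmulr_rle0 _ ub0p) lin gw mulr0 subr0 pmulr_rle0 // real_leNgt ?real0 // pos.
Qed.

End Polar.
Section Spec.
Variable C : numClosedFieldType.

Lemma adjmxM m n p (X : 'M[C]_(m, n)) (Y : 'M[C]_(n, p)) :
  adjmx (X *m Y) = adjmx Y *m adjmx X.
Proof. by rewrite /adjmx trmx_mul map_mxM. Qed.

Lemma adjmxK m n (X : 'M[C]_(m, n)) : adjmx (adjmx X) = X.
Proof. exact: (@trmxCK C). Qed.

Lemma adj_diag n (d : 'rV[C]_n) : adjmx (diag_mx d) = diag_mx (map_mx (fun z => z^*) d).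
Proof. by rewrite /adjmx tr_diag_mx map_diag_mx. Qed.

Lemma char_poly_similar n (P M : 'M[C]_n) : P \in unitmx ->
  char_poly (invmx P *m M *m P) = char_poly M.
Proof.
move=> Pu; rewrite /char_poly /char_poly_mx.
set f := map_mx (@polyC C).
have fPP : f (invmx P) *m f P = 1%:M by rewrite -map_mxM mulVmx // map_mx1.
have -> : 'X%:M - f (invmx P *m M *m P) = f (invmx P) *m ('X%:M - f M) *m f P.
  rewrite /f !map_mxM -/f mulmxBr mulmxBl.
  by rewrite scalar_mxC -(mulmxA _%:M) fPP mulmx1.
rewrite !det_mulmx mulrC mulrA -det_mulmx.
by rewrite -[f P *m _]/(f P *m f (invmx P)) -map_mxM mulmxV // map_mx1 det1 mul1r.
Qed.


Lemma hpart_spec n (A : 'M[C]_n) (u : C) : is_normal_mx A ->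
  Hpart u A = invmx (spectralmx A) *m
     diag_mx (\row_k 'Re (u * spectral_diag A 0 k)) *m spectralmx A.
Proof.
move=> nA; have nA' : A \is normalmx by apply/normalmxP.
have EA := orthomx_spectralP nA'.
set P := spectralmx A in EA *; set D := spectral_diag A in EA *.
have Pu : P \is unitarymx by apply: spectral_unitarymx.
have iP : invmx P = adjmx P by rewrite invmx_unitary.
have EA' : adjmx A = invmx P *m diag_mx (map_mx (fun z => z^*) D) *m P.
  rewrite {1}EA !adjmxM adj_diag iP adjmxK mulmxA //.
rewrite /Hpart EA' {1}EA.
have -> : diag_mx (\row_k 'Re (u * D 0 k)) =
   2^-1 *: (u *: diag_mx D + u^* *: diag_mx (map_mx (fun z => z^*) D)).
  apply/matrixP => i j; rewrite !mxE.
  case: eqP => [->|_]; last by rewrite !mulr0n !mulr0 addr0 mulr0.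
  by rewrite !mulr1n ReE rmorphM /= mulrC.
by rewrite -!scalemxAr -!scalemxAl mulmxDr mulmxDl -!scalemxAr -!scalemxAl.
Qed.


Lemma eigs_normal n (A : 'M[C]_n) (u : C) : is_normal_mx A ->
  eigs_desc (Hpart u A) =
  sort (fun x y : C => y <= x) [seq 'Re (u * spectral_diag A 0 k) | k <- enum 'I_n].
Proof.
move=> nA; rewrite /eigs_desc; case: closed_field_poly_normal => s /= Es.
rewrite (monicP (char_poly_monic _)) scale1r in Es.
rewrite hpart_spec // char_poly_similar ?spectral_unit // in Es.
rewrite char_poly_trig ?diag_mx_is_trig // in Es.
set r := [seq _ | k <- _].
have pe : perm_eq s r.
  apply: prod_XsubC_eq; rewrite -Es /r big_map big_enum /=.
  by apply: eq_bigr => i _; rewrite !mxE eqxx mulr1n.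
have sR x : x \in s -> x \is Num.real.
  by rewrite (perm_mem pe) => /mapP [k _ ->].
apply/perm_sort_inP => //.
- by move=> x y /sR xR /sR yR; exact: real_leVge.
- by move=> x y z _ _ _ /= yx zy; exact: le_trans zy yx.
- by move=> x y _ _ /andP [yx xy]; apply: le_anti; rewrite xy yx.
Qed.

End Spec.

Section Main.
Variable C : numClosedFieldType.

Fixpoint Bof (s : seq C) : seq C :=
  if s is x :: s' then [seq x - y | y <- s'] ++ Bof s' else [::].

Lemma pairwise_Bof (u : C) s :
  pairwise (fun x y => 'Re (u * y) <= 'Re (u * x)) s = Kc (Bof s) u.
Proof.
elim: s => //= x s IH; rewrite IH /Kc all_cat all_map.
congr (_ && _); apply: eq_all => y /=; by rewrite mulrBr raddfB /= subr_ge0.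
Qed.

Lemma nth_map0 (f : C -> C) s j : f 0 = 0 -> nth 0 (map f s) j = f (nth 0 s j).
Proof. by move=> f0; elim: s j => [|x s IH] [|j] //=. Qed.

Definition dv n (A : 'M[C]_n) k := spectral_diag A 0 k.
Definition zof n (A : 'M[C]_n) (c : 'I_n -> C) (p : seq 'I_n) :=
  \sum_(j < n) c j * nth 0 (map (dv A) p) j.
Definition rv n (A : 'M[C]_n) (u : C) k := 'Re (u * dv A k).
Definition geC := fun x y : C => y <= x.

Lemma geC_tr : transitive geC.
Proof. by move=> x y z yx zy; exact: le_trans zy yx. Qed.

Lemma geC_anti : antisymmetric geC.
Proof. by move=> x y /andP [yx xy]; apply: le_anti; rewrite /geC in yx xy; rewrite xy yx. Qed.

Lemma sorted_Kc n (A : 'M[C]_n) (u : C) (p : seq 'I_n) :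
  sorted geC (map (rv A u) p) = Kc (Bof (map (dv A) p)) u.
Proof.
by rewrite sorted_pairwise; [rewrite pairwise_map -pairwise_Bof pairwise_map | exact: geC_tr].
Qed.

Lemma fval n (A : 'M[C]_n) c (u : C) (p : seq 'I_n) :
  is_normal_mx A -> (forall j, c j \is Num.real) -> perm_eq (enum 'I_n) p ->
  sorted geC (map (rv A u) p) ->
  \sum_(j < n) c j * eig (Hpart u A) j = 'Re (u * zof A c p).
Proof.
move=> nA cR pe srt.
have E : eigs_desc (Hpart u A) = map (rv A u) p.
  rewrite eigs_normal //; apply: (sorted_eq geC_tr geC_anti) => //.
  - apply: (@sort_sorted_in _ (fun x => x \is Num.real)).
      by move=> x y xR yR; exact: real_leVge.
    by apply/allP => x /mapP [k _ ->].
  - by rewrite perm_sort; exact: perm_map pe.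
rewrite /zof mulr_sumr raddf_sum; apply: eq_bigr => j _.
rewrite /eig E /= mulrCA (ReRl _ (cR j)); congr (_ * _).
have -> : map (rv A u) p = map (fun x => 'Re (u * x)) (map (dv A) p) by rewrite -map_comp.
by rewrite (@nth_map0 (fun x => 'Re (u * x))) // mulr0 raddf0.
Qed.

Lemma unitC (u : C) : u != 0 -> `|(`|u|^-1 * u)| = 1.
Proof.
move=> u0; rewrite normrM normfV normr_id mulVf //.
by rewrite normr_eq0.
Qed.

Lemma wnr_char n (A : 'M[C]_n) c v :
  is_normal_mx A -> (forall j, c j \is Num.real) ->
  wnr A c v <-> (forall p, p \in permutations (enum 'I_n) ->
     forall u, Kc (Bof (map (dv A) p)) u -> 'Re (u * (v - zof A c p)) <= 0).
Proof.
move=> nA cR; split.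
  move=> W p pP u Ku.
  have [->|u0] := eqVneq u 0; first by rewrite mul0r raddf0.
  have nu : 0 < `|u| by rewrite normr_gt0.
  pose u' := `|u|^-1 * u.
  have Ku' : Kc (Bof (map (dv A) p)) u' by rewrite /u' Kc_scale // invr_gt0.
  have pe : perm_eq (enum 'I_n) p by rewrite perm_sym -mem_permutations.
  have Wu' := W u' (unitC u0); rewrite (fval nA cR pe) ?sorted_Kc // in Wu'.
  have E : 'Re (u * (v - zof A c p)) = `|u| * 'Re (u' * (v - zof A c p)).
    by rewrite -ReRl ?normr_real // mulrA /u' mulVKf // gt_eqF.
  by rewrite E pmulr_rle0 // mulrBr raddfB /= subr_le0.
move=> H u un.
pose p := sort (relpre (rv A u) geC) (enum 'I_n).
have pP : p \in permutations (enum 'I_n) by rewrite mem_permutations perm_sort.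
have pe : perm_eq (enum 'I_n) p by rewrite perm_sym perm_sort.
have srt : sorted geC (map (rv A u) p).
  rewrite /p -sort_map; apply: (@sort_sorted_in _ (fun x => x \is Num.real)).
    by move=> x y xR yR; exact: real_leVge.
  by apply/allP => x /mapP [k _ ->]; apply: Creal_Re.
rewrite (fval nA cR pe srt) -subr_le0 -raddfB /= -mulrBr.
by apply: H => //; rewrite -sorted_Kc.
Qed.

End Main.

Lemma bound_aux (C : numClosedFieldType) (x a b : C) : x \is Num.real ->
  x <= a -> - x <= b -> `|x| <= `|a| + `|b|.
Proof.
move=> xR xa xb.
have aR : a \is Num.real by rewrite -(subrK x a) realD // ger0_real // subr_ge0.
have bR : b \is Num.real by rewrite -(subrK (- x) b) realD ?realN // ger0_real // subr_ge0.
rewrite real_ler_norml //; apply/andP; split.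
  rewrite lerNl; apply: (le_trans xb); apply: (le_trans (real_ler_norm bR)).
  by rewrite lerDr.
apply: (le_trans xa); apply: (le_trans (real_ler_norm aR)); by rewrite lerDl.
Qed.

Unset Implicit Arguments.

Theorem mainTheorem3 (C : numClosedFieldType) (n : nat) (A : 'M[C]_n) (c : 'I_n -> C) :
  is_normal_mx A -> (forall j, c j \is Num.real) ->
  (exists hp : seq (C * C),
      (forall h, h \in hp -> h.1 != 0 /\ h.2 \is Num.real) /\
      (forall v : C, wnr A c v <-> (forall h, h \in hp -> 'Re (h.1 * v) <= h.2)))
  /\ (exists M : C, M \is Num.real /\ forall v : C, wnr A c v -> `|v| <= M).
Proof.
move=> nA cR; split.
  exists [seq (h, 'Re (h * zof A c p)) | p <- permutations (enum 'I_n),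
                                        h <- Hs (Bof (map (dv A) p))].
  split.
    move=> h /allpairsPdep [p [h' [pP hH ->]]] /=; split; last exact: Creal_Re.
    by move: hH; rewrite mem_filter => /andP [/andP []].
  move=> v; rewrite wnr_char //; split.
    move=> W h /allpairsPdep [p [h' [pP hH ->]]] /=.
    by have := (polar _ _).1 (W p pP) h' hH; rewrite mulrBr raddfB /= subr_le0.
  move=> Hh p pP; apply/polar => h hH; rewrite mulrBr raddfB /= subr_le0.
  by apply: (Hh (h, 'Re (h * zof A c p))); apply/allpairsPdep; exists p, h.
pose F u := \sum_(j < n) c j * eig (Hpart u A) j.
exists ((`|F 1| + `|F (-1)|) + (`|F 'i| + `|F (- 'i)|)); split.
  by apply: realD; apply: realD; apply: normr_real.
move=> v W.
have h1 : 'Re v <= F 1 by have := W 1 (normr1 _); rewrite mul1r.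
have h2 : - 'Re v <= F (-1).
  by have := W (-1) ltac:(by rewrite normrN normr1); rewrite mulN1r raddfN.
have h3 : - 'Im v <= F 'i by have := W 'i (normCi _); rewrite ReMil.
have h4 : 'Im v <= F (- 'i).
  by have := W (- 'i) ltac:(by rewrite normrN normCi); rewrite mulNr raddfN /= ReMil opprK.
have nv : `|v| <= `|'Re v| + `|'Im v|.
  rewrite {1}(Crect v); apply: (le_trans (ler_normD _ _)).
  by rewrite normrM normCi mul1r.
have b1 := bound_aux (Creal_Re v) h1 h2.
have b2 := bound_aux (Creal_Im v) h4 h3.
rewrite [`|F 'i| + _]addrC.
exact: (le_trans nv (lerD b1 b2)).
Qed.
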